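(* A Q-net $f:\mathbb Z^m\to\mathbb R^N$ ($m\ge2$) is a discrete Koenigs net if and only if the multiplicative one-form $q$ of ratios of diagonal segments is closed on both the black graph and the white graph of $\mathbb Z^m$.
   Context: Let $N\ge 3$, $m\ge 2$. For a map $f:\mathbb Z^m\to\mathbb R^N$, write $e_i$ for the $i$-th unit vector of $\mathbb Z^m$, $f=f(u)$, $f_i=f(u+e_i)$, $f_{ij}=f(u+e_i+e_j)$; negative indices denote backward shifts, e.g. $f_{-1}=f(u-e_1)$, $f_{1,-2}=f(u+e_1-e_2)$; $\delta_i f=f_i-f$, and $\tau_i g(u)=g(u+e_i)$ for any function $g$ on $\mathbb Z^m$. A Q-net is a map $f:\mathbb Z^m\to\mathbb R^N$ such that for every $u$ and $i\ne j$ the elementary quadrilateral $(f,f_i,f_{ij},f_j)$ is planar; elementary quadrilaterals are assumed non-degenerate: four distinct vertices, no three collinear, and the diagonals $(ff_{ij})$, $(f_if_j)$ meet in a point $M$ different from all vertices. Two planar quadrilaterals $(A,B,C,D)$, $(A^*,B^*,C^*,D^* )$ are dual if corresponding sides are parallel ($A^*B^*\parallel AB$, $B^*C^*\parallel BC$, $C^*D^*\parallel CD$, $D^*A^*\parallel DA$) and non-corresponding diagonals are parallel ($A^*C^*\parallel BD$, $B^*D^*\parallel AC$). A Q-net $f$ is a discrete Koenigs net if there is a Q-net $f^*:\mathbb Z^m\to\mathbb R^N$ (a dual net) such that each $(f^*,f^*_i,f^*_{ij},f^*_j)$ is dual to $(f,f_i,f_{ij},f_j)$, i.e. $\delta_if^*\parallel\delta_if$,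 $\delta_jf^*\parallel\delta_jf$, $f^*_{ij}-f^*\parallel f_i-f_j$, $f^*_i-f^*_j\parallel f_{ij}-f$. For collinear points $P,Q$, $l(P,Q)$ denotes the directed (signed) length along their line (ratios of such lengths on one line are orientation-independent). Color $u\in\mathbb Z^m$ black if $u_1+\dots+u_m$ is even and white otherwise. Each elementary square $(u,u+e_i,u+e_i+e_j,u+e_j)$ has one diagonal joining two black points and one joining two white points. The black (resp. white) graph has as vertices the black (resp. white) points of $\mathbb Z^m$ and as edges the black (resp. white) diagonals of all elementary squares. For a Q-net $f$ and the quadrilateral $(f,f_i,f_{ij},f_j)$ with diagonal intersection $M$, set $q(u\to u+e_i+e_j)=l(M,f_{ij})/l(M,f)$ and $q(u+e_i\to u+e_j)=l(M,f_j)/l(M,f_i)$, with reversed direction giving the reciprocal value. A function $q$ on directed edges of a graph with $q(-e)=1/q(e)$ is a multiplicative one-form; it is closed if its product along every closed cycle of directed edges equals $1$. *)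

(* Defs.v *)
(* Points of R^N are row vectors 'rV[R]_N over an arbitrary
   real field R (the statement is purely algebraic); lattice points of Z^m are
   row vectors 'rV[int]_m. *)
From HB Require Import structures.
From mathcomp Require Import all_boot all_order all_algebra.
From Stdlib Require ClassicalEpsilon.
Set Implicit Arguments. Unset Strict Implicit. Unset Printing Implicit Defensive.
Import Order.TTheory GRing.Theory Num.Theory.
Local Open Scope ring_scope.

Section KoenigsDefs.
Variable R : realFieldType.
Variables N m : nat.
Local Notation point := 'rV[R]_N.
Local Notation lat := 'rV[int]_m.

Definition ev (i : 'I_m) : lat := delta_mx 0 i.

Definition black (u : lat) : bool := ~~ odd (absz (\sum_k u 0 k)).

Definition collinear3 (P Q S : point) : Prop :=
  (\rank (col_mx (Q - P) (S - P)) <= 1)%N.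
Definition coplanar4 (A B C D : point) : Prop :=
  (\rank (col_mx (B - A) (col_mx (C - A) (D - A))) <= 2)%N.
Definition on_line (P Q X : point) : Prop := exists a : R, X = P + a *: (Q - P).
Definition nondeg_quad (A B C D : point) : Prop :=
  [/\ uniq [:: A; B; C; D], ~ collinear3 A B C, ~ collinear3 B C D,
      ~ collinear3 C D A & ~ collinear3 D A B] /\
  exists M : point, [/\ on_line A C M, on_line B D M & M \notin [:: A; B; C; D]].
Definition planar_nondeg (A B C D : point) : Prop :=
  coplanar4 A B C D /\ nondeg_quad A B C D.

Definition Qnet (f : lat -> point) : Prop :=
  forall (u : lat) (i j : 'I_m), i != j ->
    planar_nondeg (f u) (f (u + ev i)) (f (u + ev i + ev j)) (f (u + ev j)).

Definition parallel (a b : point) : Prop := exists c : R, a = c *: b \/ b = c *: a.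

Definition dual_quad (A B C D Ast Bst Cst Dst : point) : Prop :=
  [/\ parallel (Bst - Ast) (B - A), parallel (Cst - Bst) (C - B),
      parallel (Dst - Cst) (D - C) & parallel (Ast - Dst) (A - D)] /\
  (parallel (Cst - Ast) (D - B) /\ parallel (Dst - Bst) (C - A)).

Definition Koenigs (f : lat -> point) : Prop :=
  exists fs : lat -> point, Qnet fs /\
    forall (u : lat) (i j : 'I_m), i != j ->
      dual_quad (f u) (f (u + ev i)) (f (u + ev i + ev j)) (f (u + ev j))
                (fs u) (fs (u + ev i)) (fs (u + ev i + ev j)) (fs (u + ev j)).

(* Directed edges of the black/white graphs: a step (i, j, s, t) with i != j
   moves x to x + (+-e_i) + (+-e_j) (sign + iff the boolean is true). *)
Definition step := ('I_m * 'I_m * bool * bool)%type.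
Definition sgv (b : bool) (i : 'I_m) : lat := if b then ev i else - ev i.
Definition disp (d : step) : lat :=
  let: (i, j, s, t) := d in sgv s i + sgv t j.
Definition valid_step (d : step) : bool :=
  let: (i, j, _, _) := d in i != j.

(* intersection point of the lines (PQ) and (ST) (chosen by Hilbert epsilon;
   unique when the lines are distinct and meet) *)
Definition isect (P Q S T : point) : point :=
  ClassicalEpsilon.epsilon (inhabits 0) (fun M => on_line P Q M /\ on_line S T M).
(* l(M,Y)/l(M,X) for Y, X collinear with M, X <> M: the l with Y - M = l (X - M) *)
Definition dlratio (M Y X : point) : R :=
  ClassicalEpsilon.epsilon (inhabits 0) (fun l : R => Y - M = l *: (X - M)).

(* q(x -> y) = l(M, f y) / l(M, f x), M the intersection of the diagonals of
   the elementary square containing the diagonal edge (x, y); its other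
   diagonal joins x + (+-e_i) and x + (+-e_j).  This agrees with both
   defining formulas of the paper and with q(-e) = 1/q(e). *)
Definition qform (f : lat -> point) (x : lat) (d : step) : R :=
  let: (i, j, s, t) := d in
  let y := x + disp d in
  let M := isect (f x) (f y) (f (x + sgv s i)) (f (x + sgv t j)) in
  dlratio M (f y) (f x).

Fixpoint qprod (f : lat -> point) (x : lat) (c : seq step) : R :=
  match c with
  | [::] => 1
  | d :: c' => qform f x d * qprod f (x + disp d) c'
  end.

Definition q_closed_on (col : bool) (f : lat -> point) : Prop :=
  forall (x : lat) (c : seq step), black x = col -> all valid_step c ->
    \sum_(d <- c) disp d = 0 -> qprod f x c = 1.

End KoenigsDefs.

(* Main.v *)
Require Import Defs.
From HB Require Import structures.
From mathcomp Require Import all_boot all_order all_algebra.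
From Stdlib Require Import Ring Field ClassicalEpsilon.
Set Implicit Arguments. Unset Strict Implicit. Unset Printing Implicit Defensive.
Import Order.TTheory GRing.Theory Num.Theory.
Local Open Scope ring_scope.

Section Main.
Variable R : realFieldType.
Variables N m : nat.
Local Notation point := 'rV[R]_N.
Local Notation lat := 'rV[int]_m.


Definition ad (x y : R) : R := x + y.
Definition mu (x y : R) : R := x * y.
Definition op (x : R) : R := - x.
Definition iv (x : R) : R := x^-1.
Definition z0 : R := 0.
Definition o1 : R := 1.
Lemma Rth : @ring_theory R z0 o1 ad mu (fun x y => ad x (op y)) op eq.
Proof. constructor; rewrite /ad/mu/op/z0/o1.
- exact: add0r. - exact: addrC. - exact: addrA. - exact: mul1r. - exact: mulrC.
- exact: mulrA. - exact: mulrDl. - by []. - exact: subrr. Qed.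
Lemma Fth : @field_theory R z0 o1 ad mu (fun x y => ad x (op y)) op (fun x y => mu x (iv y)) iv eq.
Proof. constructor. exact Rth. apply/eqP/oner_neq0. by []. move=> p Hp; rewrite /mu/iv/o1 mulrC mulfV //; apply/eqP. exact Hp. Qed.
Add Field Rfield : Fth.
Lemma adE x y : x + y = ad x y. Proof. by []. Qed.
Lemma muE x y : x * y = mu x y. Proof. by []. Qed.
Lemma opE x : - x = op x. Proof. by []. Qed.
Lemma ivE x : x^-1 = iv x. Proof. by []. Qed.
Lemma z0E : 0 = z0. Proof. by []. Qed.
Lemma o1E : 1 = o1. Proof. by []. Qed.
Definition ent (v : point) (k : 'I_N) : R := v 0 k.
Lemma entE (v : point) k : v 0 k = ent v k. Proof. by []. Qed.
Ltac rring := rewrite ?entE ?adE ?muE ?opE ?ivE ?z0E ?o1E; match goal with |- @eq _ ?a ?b => change (@eq R a b) end; ring.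
Ltac rfield := rewrite ?entE ?adE ?muE ?opE ?ivE ?z0E ?o1E; match goal with |- @eq _ ?a ?b => change (@eq R a b) end; field; rewrite /z0; repeat split; try exact/eqP.

Definition adI (x y : int) : int := x + y.
Definition muI (x y : int) : int := x * y.
Definition opI (x : int) : int := - x.
Definition z0I : int := 0.
Definition o1I : int := 1.
Lemma Ith : @ring_theory int z0I o1I adI muI (fun x y => adI x (opI y)) opI eq.
Proof. constructor; rewrite /adI/muI/opI/z0I/o1I.
- exact: add0r. - exact: addrC. - exact: addrA. - exact: mul1r. - exact: mulrC.
- exact: mulrA. - exact: mulrDl. - by []. - exact: subrr. Qed.
Add Ring Iring : Ith.
Lemma adIE x y : x + y = adI x y. Proof. by []. Qed.
Lemma muIE x y : x * y = muI x y. Proof. by []. Qed.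
Lemma opIE x : - x = opI x. Proof. by []. Qed.
Lemma z0IE : 0 = z0I. Proof. by []. Qed.
Lemma o1IE : 1 = o1I. Proof. by []. Qed.
Definition entI (v : lat) (k : 'I_m) : int := v 0 k.
Lemma entIE (v : lat) k : v 0 k = entI v k. Proof. by []. Qed.
Ltac iring := rewrite ?entIE ?adIE ?muIE ?opIE ?z0IE ?o1IE; match goal with |- @eq _ ?a ?b => change (@eq int a b) end; ring.
Ltac latring := apply/rowP => ?; rewrite !mxE; iring.


Lemma sum_ev (i : 'I_m) : \sum_k (ev i : lat) 0 k = 1.
Proof.
rewrite (bigD1 i) //= big1 ?addr0; first by rewrite mxE !eqxx.
by move=> k /negPf ki; rewrite mxE eqxx ki.
Qed.

Lemma sumD (x y : lat) : \sum_k (x + y) 0 k = \sum_k x 0 k + \sum_k y 0 k.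
Proof. by rewrite -big_split /=; apply: eq_bigr => k _; rewrite mxE. Qed.
Lemma sumN (x : lat) : \sum_k (- x) 0 k = - \sum_k x 0 k.
Proof. by rewrite -sumrN; apply: eq_bigr => k _; rewrite mxE. Qed.

Lemma odd_absz_S (z : int) : odd (absz (z + 1)) = ~~ odd (absz z).
Proof.
case: z => n.
- by rewrite -PoszD addn1.
- rewrite NegzE; case: n => [|n] //=.
  by rewrite subn1 /= !negbK.
Qed.

Lemma black_ev (x : lat) i : black (x + ev i) = ~~ black x.
Proof. by rewrite /black sumD sum_ev odd_absz_S. Qed.

Lemma black_evN (x : lat) i : black (x - ev i) = ~~ black x.
Proof. by rewrite -[in RHS](subrK (ev i) x) black_ev negbK. Qed.


Lemma evE (i l : 'I_m) : (ev i : lat) 0 l = (l == i)%:R.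
Proof. by rewrite mxE eqxx. Qed.

Definition proj (k : nat) (x : lat) : lat := \row_l (if (l < k)%N then x 0 l else 0).

Lemma projE k (x : lat) l : proj k x 0 l = if (l < k)%N then x 0 l else 0.
Proof. by rewrite mxE. Qed.

Section Transport.
Variable G : Type.
Variables T Ti : lat -> 'I_m -> G -> G.
Hypothesis TiK : forall x i g, Ti x i (T x i g) = g.
Hypothesis TKi : forall x i g, T x i (Ti x i g) = g.
Hypothesis Tcomm : forall x i j g, T (x + ev i) j (T x i g) = T (x + ev j) i (T x j g).
Variable g0 : G.

Fixpoint iterF (p : lat) i n g : G := match n with 0 => g | n'.+1 => T (p + (n'%:Z) *: ev i) i (iterF p i n' g) end.
Fixpoint iterB (p : lat) i n g : G := match n with 0 => g | n'.+1 => Ti (p - (n'.+1%:Z) *: ev i) i (iterB p i n' g) end.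
Definition mv (p : lat) i (z : int) g := match z with Posz n => iterF p i n g | Negz n => iterB p i n.+1 g end.

Lemma mv_succ p i z g : mv p i (z + 1) g = T (p + z *: ev i) i (mv p i z g).
Proof.
case: z => n.
  by rewrite -PoszD addn1.
case: n => [|n].
  by rewrite /= NegzE scaleNr TKi.
have -> : Negz n.+1 + 1 = Negz n by rewrite !NegzE -[n.+2]addn1 PoszD opprD addrNK.
by rewrite /= NegzE scaleNr TKi.
Qed.

Lemma T_inj x i g h : T x i g = T x i h -> g = h.
Proof. by move=> e; rewrite -(TiK x i g) e TiK. Qed.

Lemma mv_comm p i j z g : mv (p + ev j) i z (T p j g) = T (p + z *: ev i) j (mv p i z g).
Proof.
have stepP : forall z : int, mv (p + ev j) i z (T p j g) = T (p + z *: ev i) j (mv p i z g) ->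
   mv (p + ev j) i (z + 1) (T p j g) = T (p + (z + 1) *: ev i) j (mv p i (z + 1) g).
  move=> z0 IH; rewrite !mv_succ IH.
  have -> : p + ev j + z0 *: ev i = (p + z0 *: ev i) + ev j by rewrite addrAC.
  by rewrite Tcomm scalerDl scale1r addrA.
have stepN : forall z : int,
   mv (p + ev j) i (z + 1) (T p j g) = T (p + (z + 1) *: ev i) j (mv p i (z + 1) g) ->
   mv (p + ev j) i z (T p j g) = T (p + z *: ev i) j (mv p i z g).
  move=> z0; rewrite !mv_succ.
  have -> : p + ev j + z0 *: ev i = (p + z0 *: ev i) + ev j by rewrite addrAC.
  rewrite scalerDl scale1r addrA -Tcomm; exact: T_inj.
case: z => n.
  elim: n => [|n IH]; first by rewrite /= scale0r addr0.
  by move: (stepP n%:Z IH); rewrite -PoszD addn1.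
have H : forall n : nat, mv (p + ev j) i (- n%:Z) (T p j g) = T (p + (- n%:Z) *: ev i) j (mv p i (- n%:Z) g).
  elim=> [|k IH]; first by rewrite /= scale0r addr0.
  apply: stepN; have -> : - k.+1%:Z + 1 = - k%:Z by rewrite -addn1 PoszD opprD addrNK.
  exact: IH.
by rewrite NegzE; apply: H.
Qed.

Fixpoint phi (k : nat) (x : lat) : G :=
  match k with
  | 0 => g0
  | k'.+1 => match (insub k' : option 'I_m) with
             | Some i => mv (proj k' x) i (x 0 i) (phi k' x)
             | None => phi k' x end
  end.

Lemma proj_eqP k (x y : lat) : (forall l : 'I_m, (l < k)%N -> x 0 l = y 0 l) -> proj k x = proj k y.
Proof. by move=> H; apply/rowP=> l; rewrite !projE; case: ifP => // /H. Qed.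

Lemma phi_proj k (x y : lat) : (forall l : 'I_m, (l < k)%N -> x 0 l = y 0 l) -> phi k x = phi k y.
Proof.
elim: k => [|k IH] H //=.
have H' : forall l : 'I_m, (l < k)%N -> x 0 l = y 0 l by move=> l lk; apply: H; exact: ltnW.
case: insubP => [i ik ei|_]; last exact: IH.
rewrite IH // (proj_eqP H') H //; by rewrite ei.
Qed.

Lemma phi_step k : (k <= m)%N -> forall (x : lat) (i : 'I_m), (i < k)%N ->
  phi k (x + ev i) = T (proj k x) i (phi k x).
Proof.
elim: k => [|k IH] // km x i ik /=.
case: insubP => [i0 _ ei0|]; last by rewrite (leq_trans _ km).
have pk : proj k.+1 x = proj k x + x 0 i0 *: ev i0.
  apply/rowP=> l; rewrite !mxE eqxx ltnS.
  have [lk|kl|lk] := ltngtP l k.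
  - have -> : (l == i0) = false by apply/negP=> /eqP e; rewrite e ei0 ltnn in lk.
    by rewrite mulr0 addr0.
  - have -> : (l == i0) = false by apply/negP=> /eqP e; rewrite e ei0 ltnn in kl.
    by rewrite mulr0 addr0.
  - have e : l = i0 by apply: val_inj => /=; rewrite lk ei0.
    by rewrite e eqxx mulr1 add0r.
case: (ltngtP i k) ik => //.
  move=> ik _.
  have e1 : proj k (x + ev i) = proj k x + ev i.
    apply/rowP=> l; rewrite !mxE eqxx; case: ifP => // lk.
    have -> : (l == i) = false; last by rewrite addr0.
    by apply/negP=> /eqP e; rewrite e ik in lk.
  have e2 : (x + ev i) 0 i0 = x 0 i0.
    rewrite !mxE eqxx; have -> : (i0 == i) = false; last by rewrite addr0.
    by apply/negP=> /eqP e; rewrite -e ei0 ltnn in ik.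
  rewrite e1 e2 IH ?(ltnW km) // mv_comm pk //.
  by move=> ki; rewrite ltnS leqNgt ki.
move=> ei _.
have ii0 : i = i0 by apply: val_inj => /=; rewrite ei ei0.
subst i0.
have e1 : proj k (x + ev i) = proj k x.
  apply: proj_eqP => l lk; rewrite !mxE eqxx; have -> : (l == i) = false; last by rewrite addr0.
  by apply/negP=> /eqP e; rewrite e ei ltnn in lk.
have e2 : (x + ev i) 0 i = x 0 i + 1 by rewrite !mxE !eqxx.
rewrite e1 e2 mv_succ pk; congr (T _ _ (mv _ _ _ _)).
apply: phi_proj => l lk; rewrite !mxE eqxx; have -> : (l == i) = false; last by rewrite addr0.
by apply/negP=> /eqP e; rewrite e ei ltnn in lk.
Qed.

Lemma proj_m (x : lat) : proj m x = x.
Proof. by apply/rowP=> l; rewrite projE ltn_ord. Qed.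

Lemma transport : exists f : lat -> G, forall x i, f (x + ev i) = T x i (f x).
Proof.
exists (phi m) => x i; rewrite phi_step ?proj_m //.
Qed.
End Transport.


Definition rank2 (p r : point) := (1 < \rank (col_mx p r))%N.

Lemma comb_mul (a b : R) (p r : point) : a *: p + b *: r = row_mx a%:M b%:M *m col_mx p r.
Proof. by rewrite mul_row_col !mul_scalar_mx. Qed.

Lemma rank_scal2 (s t : R) (v : point) : (\rank (col_mx (s *: v) (t *: v)) <= 1)%N.
Proof.
rewrite -!mul_scalar_mx -mul_col_mx.
exact: leq_trans (mxrankM_maxr _ _) (rank_leq_row _).
Qed.

Lemma rank_comb2 (a b c d : R) (p r X Y : point) : X = a *: p + b *: r -> Y = c *: p + d *: r ->
  (\rank (col_mx X Y) <= \rank (col_mx p r))%N.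
Proof. by move=> -> ->; rewrite !comb_mul -mul_col_mx mxrankM_maxr. Qed.

Lemma rank_comb3 (a b c d e g : R) (p r X Y Z : point) : X = a *: p + b *: r -> Y = c *: p + d *: r ->
  Z = e *: p + g *: r -> (\rank (col_mx X (col_mx Y Z)) <= 2)%N.
Proof.
move=> -> -> ->; rewrite !comb_mul -!mul_col_mx.
exact: leq_trans (mxrankM_maxr _ _) (rank_leq_row _).
Qed.

Lemma rank2_indep (p r : point) a b : rank2 p r -> a *: p + b *: r = 0 -> a = 0 /\ b = 0.
Proof.
move=> h e.
have rf : row_free (col_mx p r).
  by rewrite /row_free eqn_leq rank_leq_row; exact: h.
have : row_mx a%:M b%:M = 0 :> 'rV_(1 + 1).
  apply: (row_free_inj rf); by rewrite mul0mx -comb_mul.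
move/eqP; rewrite row_mx_eq0 => /andP[/eqP ha /eqP hb].
split; [move/matrixP: ha => /(_ 0 0) | move/matrixP: hb => /(_ 0 0)]; by rewrite !mxE.
Qed.

Lemma rank2_p (p r : point) : rank2 p r -> p != 0.
Proof.
move=> h; apply/eqP=> p0; have [] := rank2_indep (a := 1) (b := 0) h.
  by rewrite p0 scaler0 scale0r addr0.
by move/eqP; rewrite oner_eq0.
Qed.
Lemma rank2_r (p r : point) : rank2 p r -> r != 0.
Proof.
move=> h; apply/eqP=> r0; have [] := rank2_indep (a := 0) (b := 1) h.
  by rewrite r0 scaler0 scale0r addr0.
by move=> _ /eqP; rewrite oner_eq0.
Qed.

Lemma noncol_comb (a b c d : R) (p r X Y : point) : rank2 p r -> a * d - b * c != 0 ->
  X = a *: p + b *: r -> Y = c *: p + d *: r -> ~ (\rank (col_mx X Y) <= 1)%N.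
Proof.
move=> h D eX eY hle.
have ep : p = (d / (a * d - b * c)) *: X + (- b / (a * d - b * c)) *: Y.
  rewrite eX eY; apply/rowP=> k; rewrite !mxE; rfield; exact/eqP.
have er : r = (- c / (a * d - b * c)) *: X + (a / (a * d - b * c)) *: Y.
  rewrite eX eY; apply/rowP=> k; rewrite !mxE; rfield; exact/eqP.
have := rank_comb2 ep er; rewrite leqNgt => /negP; apply.
exact: leq_ltn_trans hle h.
Qed.

Lemma noncol_neq (P Q S : point) : ~ collinear3 P Q S -> [/\ P != Q, P != S & Q != S].
Proof.
rewrite /collinear3 => h; split; apply/eqP => e; apply: h.
- have -> : Q - P = 0 *: (S - P) by rewrite e subrr scale0r.
  by rewrite -[X in col_mx _ X]scale1r rank_scal2.
- have -> : S - P = 0 *: (Q - P) by rewrite e subrr scale0r.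
  by rewrite -[X in col_mx X _]scale1r rank_scal2.
- have -> : S - P = 1 *: (Q - P) by rewrite e scale1r.
  by rewrite -[X in col_mx X _]scale1r rank_scal2.
Qed.

Lemma quad_param (A B C D : point) : nondeg_quad A B C D -> exists M p r b d,
  [/\ A = M + p, B = M + r, C = M + b *: p & D = M + d *: r] /\
  [/\ rank2 p r, b != 0, b != 1, d != 0 & d != 1].
Proof.
case=> [[uq nABC nBCD nCDA nDAB] [M [[al eAC] [be eBD] Mn]]].
move: Mn; rewrite !inE !negb_or => /and4P[nMA nMB nMC nMD].
have [nAB nAC nBC] := noncol_neq nABC.
have [_ nBD _] := noncol_neq nBCD.
have al0 : al != 0 by apply: contraNneq nMA => a0; rewrite eAC a0 scale0r addr0.
have be0 : be != 0 by apply: contraNneq nMB => a0; rewrite eBD a0 scale0r addr0.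
exists M, (A - M), (B - M), ((al - 1) / al), ((be - 1) / be).
have eC : C = M + (al - 1) / al *: (A - M).
  rewrite eAC; apply/rowP=> k; rewrite !mxE; rfield; exact/eqP.
have eD : D = M + (be - 1) / be *: (B - M).
  rewrite eBD; apply/rowP=> k; rewrite !mxE; rfield; exact/eqP.
have b0 : (al - 1) / al != 0.
  apply: contraNneq nMC => e0; by rewrite eC e0 scale0r addr0.
have b1 : (al - 1) / al != 1.
  apply: contraNneq nAC => e0; by rewrite eC e0 scale1r addrC subrK.
have d0 : (be - 1) / be != 0.
  apply: contraNneq nMD => e0; by rewrite eD e0 scale0r addr0.
have d1 : (be - 1) / be != 1.
  apply: contraNneq nBD => e0; by rewrite eD e0 scale1r addrC subrK.
split; first by split; rewrite // addrC subrK.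
split => //.
rewrite /rank2 ltnNge; apply/negP => hle; apply: nABC.
rewrite /collinear3.
apply: leq_trans _ hle.
apply: (@rank_comb2 (-1) 1 ((al - 1) / al - 1) 0).
  by apply/rowP=> k; rewrite !mxE; rring.
by rewrite {1}eC; apply/rowP=> k; rewrite !mxE; rring.
Qed.

Lemma online_param (P Q Z M p : point) x1 x2 : P = M + x1 *: p -> Q = M + x2 *: p ->
  on_line P Q Z -> exists k, Z = M + k *: p.
Proof.
move=> eP eQ [a eZ]; exists (x1 + a * (x2 - x1)).
by rewrite eZ eP eQ; apply/rowP=> k; rewrite !mxE; rring.
Qed.

Lemma online_M (P Q M p : point) x1 x2 : x1 != x2 -> P = M + x1 *: p -> Q = M + x2 *: p ->
  on_line P Q M.
Proof.
move=> hx eP eQ; exists (- x1 / (x2 - x1)).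
have h : x2 - x1 != 0 by rewrite subr_eq0 eq_sym.
rewrite eP eQ; apply/rowP=> k; rewrite !mxE; rfield; exact/eqP.
Qed.

Lemma isect_eq (P Q S T M p r : point) x1 x2 y1 y2 : rank2 p r -> x1 != x2 -> y1 != y2 ->
  P = M + x1 *: p -> Q = M + x2 *: p -> S = M + y1 *: r -> T = M + y2 *: r ->
  isect P Q S T = M.
Proof.
move=> h hx hy eP eQ eS eT.
have ex : exists Z, on_line P Q Z /\ on_line S T Z.
  by exists M; split; [exact: online_M hx eP eQ | exact: online_M hy eS eT].
have [h1 h2] := epsilon_spec (inhabits 0) _ ex.
rewrite /isect; set Z := epsilon _ _ in h1 h2 *.
have [k1 e1] := online_param eP eQ h1.
have [k2 e2] := online_param eS eT h2.
have : k1 *: p + (- k2) *: r = 0.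
  have e : M + k1 *: p = M + k2 *: r by rewrite -e1 -e2.
  apply/rowP=> k; move/rowP: e => /(_ k); rewrite !mxE => e.
  have -> : k1 * p 0 k + - k2 * r 0 k = (M 0 k + k1 * p 0 k) - (M 0 k + k2 * r 0 k) by rring.
  by rewrite e subrr.
case/(rank2_indep h) => k10 _; by rewrite e1 k10 scale0r addr0.
Qed.

Lemma dlratio_eq (M X Y p : point) x y : p != 0 -> x != 0 -> X = M + x *: p -> Y = M + y *: p ->
  dlratio M Y X = y / x.
Proof.
move=> hp hx eX eY.
have ex : exists l : R, Y - M = l *: (X - M).
  exists (y / x); rewrite eX eY; apply/rowP=> k; rewrite !mxE; rfield; exact/eqP.
have := epsilon_spec (inhabits 0) _ ex; rewrite -/(dlratio M Y X).
set l := dlratio M Y X => e.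
have : (y - l * x) *: p = 0.
  apply/rowP=> k; move/rowP: e => /(_ k); rewrite eX eY !mxE => e'.
  have -> : (y - l * x) * p 0 k = (M 0 k + y * p 0 k + - M 0 k) - l * (M 0 k + x * p 0 k + - M 0 k) by rring.
  by rewrite e' subrr.
move/eqP; rewrite scaler_eq0 (negPf hp) orbF subr_eq0 => /eqP ->.
rfield; exact/eqP.
Qed.

Lemma rank2_sym (p r : point) : rank2 p r -> rank2 r p.
Proof.
rewrite /rank2 => h; apply: leq_trans h _.
apply: (@rank_comb2 0 1 1 0); apply/rowP=> k; rewrite !mxE; rring.
Qed.

Definition reach (v : lat) := exists c : seq (step m), all (@valid_step m) c /\ \sum_(d <- c) disp d = v.

Lemma reach0 : reach 0.
Proof. by exists [::]; rewrite big_nil. Qed.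

Lemma reachD u v : reach u -> reach v -> reach (u + v).
Proof.
move=> [c1 [v1 s1]] [c2 [v2 s2]]; exists (c1 ++ c2).
by rewrite all_cat v1 v2 big_cat s1 s2.
Qed.

Definition nstep (d : step m) : step m := let: (i, j, s, t) := d in (i, j, ~~ s, ~~ t).

Lemma disp_nstep d : disp (nstep d) = - disp d.
Proof. by case: d => [[[i j] s] t] /=; rewrite opprD; case: s; case: t; rewrite /= ?opprK. Qed.

Lemma reachN v : reach v -> reach (- v).
Proof.
move=> [c [vc sc]]; exists (map nstep c); split.
  by rewrite all_map; apply/allP => d /(allP vc); case: d => [[[i j] s] t].
by rewrite big_map (eq_bigr (fun d => - disp d)) ?sumrN ?sc // => d _; rewrite disp_nstep.
Qed.

Lemma reach_step d : valid_step d -> reach (disp d).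
Proof. by move=> vd; exists [:: d]; rewrite /= vd big_cons big_nil addr0. Qed.

Lemma reachZ (z : int) v : reach v -> reach (z *: v).
Proof.
move=> hv.
have hn : forall n : nat, reach (n%:Z *: v).
  elim=> [|n IH]; first by rewrite scale0r; exact: reach0.
  have -> : (n.+1)%:Z = n%:Z + 1 by rewrite -PoszD addn1.
  by rewrite scalerDl scale1r; apply: reachD.
case: z => n; first exact: hn.
by rewrite NegzE scaleNr; apply: reachN.
Qed.

Lemma reach_sum (F : 'I_m -> lat) : (forall k, reach (F k)) -> reach (\sum_k F k).
Proof. by move=> h; apply: (big_ind reach reach0 reachD) => k _. Qed.

Section Decomp.
Hypothesis hm : (1 < m)%N.
Let i0 : 'I_m := Ordinal (ltnW hm).
Let i1 : 'I_m := Ordinal hm.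

Lemma reach_diff k : reach (ev k - ev i0).
Proof.
case: (eqVneq k i0) => [->|ki]; first by rewrite subrr; exact: reach0.
by apply: (@reach_step (k, i0, true, false)).
Qed.

Lemma reach_2 : reach (ev i0 + ev i0).
Proof.
have ne : i0 != i1 by apply/eqP => /(congr1 val).
have := reachD (reach_step (d := (i0, i1, true, true)) ne) (reach_step (d := (i0, i1, true, false)) ne).
congr reach; rewrite /=; latring.
Qed.

Lemma decomp (v : lat) : reach v \/ reach (v - ev i0).
Proof.
set z := \sum_k v 0 k.
have ev_dec : v = \sum_k (v 0 k *: (ev k - ev i0)) + z *: ev i0.
  apply/rowP=> l; rewrite mxE summxE mxE.
  under eq_bigr do rewrite !mxE.
  rewrite /z mulr_suml -big_split /=.
  rewrite (bigD1 l) //= big1 ?addr0.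
    rewrite !mxE eqxx /=; case: (l == i0) => /=; rewrite ?mulr1n ?mulr0n; iring.
  move=> k /negPf kl; rewrite !mxE eqxx eq_sym kl /=; case: (l == i0) => /=; rewrite ?mulr1n ?mulr0n; iring.
have hz := divz_eq z 2.
have r0 : (0 <= (z %% 2)%Z) by rewrite modz_ge0.
have r1 : ((z %% 2)%Z < 2) by rewrite ltz_pmod.
have base : reach (\sum_k (v 0 k *: (ev k - ev i0)) + (z %/ 2)%Z *: (ev i0 + ev i0)).
  apply: reachD; first by apply: reach_sum => k; apply: reachZ; exact: reach_diff.
  by apply: reachZ; exact: reach_2.
have [e|e] : (z %% 2)%Z = 0 \/ (z %% 2)%Z = 1.
  move: r0 r1; case: (z %% 2)%Z => // n _; case: n => [|[|n]] //; by [left|right].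
- left; move: base; congr reach; rewrite [RHS]ev_dec [in RHS]hz e addr0; congr (_ + _).
  by rewrite -scalerA scaler_nat mulr2n.
- right; move: base; congr reach; rewrite [in RHS]ev_dec [in RHS]hz e -addrA; congr (_ + _).
  rewrite scalerDl scale1r addrK.
  by rewrite -scalerA scaler_nat mulr2n.
Qed.
End Decomp.

Lemma black_disp (x : lat) d : black (x + disp d) = black x.
Proof.
case: d => [[[i j] s] t] /=; rewrite addrA.
case: s; case: t; rewrite /=.
- by rewrite (black_ev (x + ev i)) black_ev negbK.
- by rewrite (black_evN (x + ev i)) black_ev negbK.
- by rewrite (black_ev (x - ev i)) black_evN negbK.
- by rewrite (black_evN (x - ev i)) black_evN negbK.
Qed.

Lemma black_walk (x : lat) (c : seq (step m)) : black (x + \sum_(d <- c) disp d) = black x.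
Proof.
elim: c x => [|d c IH] x; first by rewrite big_nil addr0.
by rewrite big_cons addrA IH black_disp.
Qed.

Lemma black_reach (x v : lat) : reach v -> black (x + v) = black x.
Proof. by case=> c [_ <-]; exact: black_walk. Qed.

Lemma qprod_cat (g : lat -> point) x c1 c2 :
  qprod g x (c1 ++ c2) = qprod g x c1 * qprod g (x + \sum_(d <- c1) disp d) c2.
Proof.
elim: c1 x => [|d c1 IH] x /=; first by rewrite big_nil addr0 mul1r.
by rewrite IH big_cons addrA mulrA.
Qed.

Lemma same_color_reach (hm : (1 < m)%N) (x b : lat) : black x = black b -> reach (x - b).
Proof.
move=> e; case: (decomp hm (x - b)) => // h.
have : black x = ~~ black b.
  have ex : x = (b + (x - b - ev (Ordinal (ltnW hm)))) + ev (Ordinal (ltnW hm)) by latring.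
  by rewrite ex (black_ev (b + _)) black_reach.
by rewrite e; case: (black b).
Qed.

Ltac use_eq' h := match type of h with ?X = ?Y => transitivity (X - Y); [ | by rewrite h subrr] end.

Lemma scal_nz (k : R) (v : point) : k != 0 -> v != 0 -> k *: v != 0.
Proof. by move=> hk hv; rewrite scaler_eq0 negb_or hk hv. Qed.

Section DualGeo.
Variables (A0 p r : point) (b d k : R).
Hypotheses (h : rank2 p r) (b0 : b != 0) (b1 : b != 1) (d0 : d != 0) (d1 : d != 1) (k0 : k != 0).
Let B0 := A0 + k *: (r - p).
Let C0 := A0 + (k * (1 - b^-1)) *: r.
Let D0 := A0 + (k / d) *: (d *: r - p).
Let Ms := A0 + k *: r.

Let hb1 : b - 1 != 0. Proof. by rewrite subr_eq0. Qed.
Let hd1 : d - 1 != 0. Proof. by rewrite subr_eq0. Qed.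
Let hbi : 1 - b^-1 != 0.
Proof. by apply: contraNneq b1; move/eqP; rewrite subr_eq0 eq_sym invr_eq1. Qed.
Let hdi : 1 - d^-1 != 0.
Proof. by apply: contraNneq d1; move/eqP; rewrite subr_eq0 eq_sym invr_eq1. Qed.
Let hp : p != 0. Proof. exact: rank2_p h. Qed.
Let hr : r != 0. Proof. exact: rank2_r h. Qed.

Lemma nABC : ~ collinear3 A0 B0 C0.
Proof.
apply: (@noncol_comb (- k) k 0 (k * (1 - b^-1)) p r _ _ h).
- rewrite mulr0 ?subr0 ?sub0r ?mulNr ?mulrN ?opprK ?mulrNN ?oppr_eq0 !mulf_eq0 !negb_or ?invr_eq0 ?k0 ?b0 ?d0 ?hbi ?hdi //.
- apply/rowP=> l; rewrite !mxE; rring.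
- apply/rowP=> l; rewrite !mxE; rring.
Qed.

Lemma nBCD : ~ collinear3 B0 C0 D0.
Proof.
apply: (@noncol_comb k (- (k / b)) (k * (1 - d^-1)) 0 p r _ _ h).
- rewrite mulr0 ?subr0 ?sub0r ?mulNr ?mulrN ?opprK ?mulrNN ?oppr_eq0 !mulf_eq0 !negb_or ?invr_eq0 ?k0 ?b0 ?d0 ?hbi ?hdi //.
- apply/rowP=> l; rewrite !mxE; rring.
- apply/rowP=> l; rewrite !mxE; rfield; exact/eqP.
Qed.

Lemma nCDA : ~ collinear3 C0 D0 A0.
Proof.
apply: (@noncol_comb (- (k / d)) (k / b) 0 (- (k * (1 - b^-1))) p r _ _ h).
- rewrite mulr0 ?subr0 ?sub0r ?mulNr ?mulrN ?opprK ?mulrNN ?oppr_eq0 !mulf_eq0 !negb_or ?invr_eq0 ?k0 ?b0 ?d0 ?hbi ?hdi //.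
- apply/rowP=> l; rewrite !mxE; rfield; exact/eqP.
- apply/rowP=> l; rewrite !mxE; rring.
Qed.

Lemma nDAB : ~ collinear3 D0 A0 B0.
Proof.
apply: (@noncol_comb (k / d) (- k) (- (k * (1 - d^-1))) 0 p r _ _ h).
- rewrite mulr0 ?subr0 ?sub0r ?mulNr ?mulrN ?opprK ?mulrNN ?oppr_eq0 !mulf_eq0 !negb_or ?invr_eq0 ?k0 ?b0 ?d0 ?hbi ?hdi //.
- apply/rowP=> l; rewrite !mxE; rfield; exact/eqP.
- apply/rowP=> l; rewrite !mxE; rfield; exact/eqP.
Qed.

Lemma dual_nondeg : planar_nondeg A0 B0 C0 D0.
Proof.
split.
  apply: (@rank_comb3 (- k) k 0 (k * (1 - b^-1)) (- (k / d)) k p r).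
  - apply/rowP=> l; rewrite !mxE; rring.
  - apply/rowP=> l; rewrite !mxE; rring.
  - apply/rowP=> l; rewrite !mxE; rfield; exact/eqP.
have [nAB nAC nBC] := noncol_neq nABC.
have [_ nBD nCD] := noncol_neq nBCD.
have [nDA _ _] := noncol_neq nDAB.
split.
  split; [|exact: nABC|exact: nBCD|exact: nCDA|exact: nDAB].
  rewrite /= !inE !negb_or nAB nAC nBC nBD nCD /= andbT.
  by rewrite eq_sym.
exists Ms; split.
- exists ((1 - b^-1)^-1); apply/rowP=> l; rewrite !mxE; rfield.
- exists (d / (d - 1)); apply/rowP=> l; rewrite !mxE; rfield.
- rewrite !inE !negb_or; apply/and4P; split; apply/eqP => e.
  + have : k *: r = 0 by use_eq' e; apply/rowP=> l; rewrite !mxE; rring.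
    by apply/eqP; apply: scal_nz.
  + have : k *: p = 0 by use_eq' e; apply/rowP=> l; rewrite !mxE; rring.
    by apply/eqP; apply: scal_nz.
  + have : (k / b) *: r = 0 by use_eq' e; apply/rowP=> l; rewrite !mxE; rring.
    by apply/eqP; apply: scal_nz; rewrite // mulf_neq0 ?invr_eq0.
  + have : (k / d) *: p = 0 by use_eq' e; apply/rowP=> l; rewrite !mxE; rfield; exact/eqP.
    by apply/eqP; apply: scal_nz; rewrite // mulf_neq0 ?invr_eq0.
Qed.

Lemma dual_ok (M : point) : dual_quad (M + p) (M + r) (M + b *: p) (M + d *: r) A0 B0 C0 D0.
Proof.
split; first split.
- exists k; left; apply/rowP=> l; rewrite !mxE; rring.
- exists (k / b); left; apply/rowP=> l; rewrite !mxE; rfield; exact/eqP.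
- exists (k / (b * d)); left; apply/rowP=> l; rewrite !mxE; rfield; (repeat split); exact/eqP.
- exists (k / d); left; apply/rowP=> l; rewrite !mxE; rfield; exact/eqP.
split.
- exists (k * (1 - b^-1) / (d - 1)); left; apply/rowP=> l; rewrite !mxE; rfield; (repeat split); exact/eqP.
- exists (k * (1 - d^-1) / (b - 1)); left; apply/rowP=> l; rewrite !mxE; rfield; (repeat split); exact/eqP.
Qed.
End DualGeo.

Section QuadF.
Variable f : lat -> point.
Hypothesis hf : Qnet f.

Definition qparam (u : lat) i j M p r b d :=
  [/\ f u = M + p, f (u + ev i) = M + r, f (u + ev i + ev j) = M + b *: p & f (u + ev j) = M + d *: r] /\
  [/\ rank2 p r, b != 0, b != 1, d != 0 & d != 1].

Lemma quadf u i j : i != j -> exists M p r b d, qparam u i j M p r b d /\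
  [/\ qform f u (i, j, true, true) = b,
      qform f (u + ev i + ev j) (i, j, false, false) = b^-1,
      qform f (u + ev i) (i, j, false, true) = d &
      qform f (u + ev j) (i, j, true, false) = d^-1].
Proof.
move=> hij; have [_ nq] := hf u hij.
have [M [p [r [b [d [[eA eB eC eD] [h b0 b1 d0 d1]]]]]]] := quad_param nq.
exists M, p, r, b, d; split; first by [].
have eA' : f u = M + 1 *: p by rewrite scale1r.
have eB' : f (u + ev i) = M + 1 *: r by rewrite scale1r.
have hp := rank2_p h; have hr := rank2_r h.
have h' := rank2_sym h.
have b1' : (1 : R) != b by rewrite eq_sym.
have d1' : (1 : R) != d by rewrite eq_sym.
split.
- rewrite /qform /= (_ : u + (ev i + ev j) = u + ev i + ev j); last by latring.
  rewrite (isect_eq h b1' d1' eA' eC eB' eD).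
  by rewrite (dlratio_eq hp (oner_neq0 _) eA' eC) divr1.
- rewrite /qform /= (_ : u + ev i + ev j + (- ev i + - ev j) = u); last by latring.
  rewrite (_ : u + ev i + ev j - ev i = u + ev j); last by latring.
  rewrite (_ : u + ev i + ev j - ev j = u + ev i); last by latring.
  rewrite (isect_eq h b1 d1 eC eA' eD eB').
  by rewrite (dlratio_eq hp b0 eC eA') div1r.
- rewrite /qform /= (_ : u + ev i + (- ev i + ev j) = u + ev j); last by latring.
  rewrite (_ : u + ev i - ev i = u); last by latring.
  rewrite (isect_eq h' d1' b1' eB' eD eA' eC).
  by rewrite (dlratio_eq hr (oner_neq0 _) eB' eD) divr1.
- rewrite /qform /= (_ : u + ev j + (ev i + - ev j) = u + ev i); last by latring.
  rewrite (_ : u + ev j + ev i = u + ev i + ev j); last by latring.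
  rewrite (_ : u + ev j - ev j = u); last by latring.
  rewrite (isect_eq h' d1 b1 eD eB' eC eA').
  by rewrite (dlratio_eq hr d0 eD eB') div1r.
Qed.

Section Pot.
Variable Phi : lat -> R.
Hypothesis Phi0 : forall x, Phi x != 0.

Lemma closed_of_pot col : (forall x d, valid_step d -> qform f x d = Phi (x + disp d) / Phi x) ->
  q_closed_on col f.
Proof.
move=> H.
have key : forall (x : lat) (c : seq (step m)), all (@valid_step m) c -> qprod f x c = Phi (x + \sum_(d <- c) disp d) / Phi x.
  move=> x c; elim: c x => [|d c IH] x /=.
    by move=> _; rewrite big_nil addr0 divff.
  case/andP=> vd vc; rewrite H // IH // big_cons addrA.
  have h1 := Phi0 x; have h2 := Phi0 (x + disp d).
  by rewrite [_ * (_ / _)]mulrC mulrA divfK.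
move=> x c _ vc s0.
by rewrite key // s0 addr0 divff.
Qed.

Hypothesis HQ : forall u i j, i != j ->
  Phi (u + ev i + ev j) = qform f u (i, j, true, true) * Phi u /\
  Phi (u + ev j) = qform f (u + ev i) (i, j, false, true) * Phi (u + ev i).

Lemma pot_of_quads x d : valid_step d -> qform f x d = Phi (x + disp d) / Phi x.
Proof.
case: d => [[[i j] s] t] hij; rewrite /= in hij.
have [M [p [r [b [d [[_ [_ b0 _ d0 _]] [qTT qFF qFT qTF]]]]]]] := quadf (x - ev i - ev j) hij.
have [M' [p' [r' [b' [d' [[_ [_ b0' _ d0' _]] [qTT' qFF' qFT' qTF']]]]]]] := quadf (x - ev i) hij.
have [M2 [p2 [r2 [b2 [d2 [[_ [_ b02 _ d02 _]] [qTT2 qFF2 qFT2 qTF2]]]]]]] := quadf (x - ev j) hij.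
case: s; case: t; rewrite [disp _]/=.
- have [e1 _] := HQ x hij.
  by rewrite addrA e1 mulfK.
-
  have [_ e2] := HQ (x - ev j) hij; rewrite qFT2 in e2.
  rewrite (_ : x - ev j + ev j = x) in qTF2 e2; last by latring.
  rewrite (_ : x + (ev i - ev j) = x - ev j + ev i); last by latring.
  by rewrite qTF2 e2 invfM mulrCA mulfV ?mulr1.
-
  have [_ e2] := HQ (x - ev i) hij; rewrite qFT' in e2.
  rewrite (_ : x - ev i + ev i = x) in qFT' e2; last by latring.
  rewrite (_ : x + (- ev i + ev j) = x - ev i + ev j); last by latring.
  by rewrite e2 qFT' mulfK.
- have [e1 _] := HQ (x - ev i - ev j) hij; rewrite qTT in e1.
  rewrite (_ : x - ev i - ev j + ev i + ev j = x) in qFF e1; last by latring.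
  rewrite (_ : x + (- ev i - ev j) = x - ev i - ev j); last by latring.
  by rewrite qFF e1 invfM mulrCA mulfV ?mulr1.
Qed.
End Pot.

Ltac use_eq h := match type of h with ?X = ?Y => transitivity (X - Y); [ | by rewrite h subrr] end.
Ltac from0 h := apply/eqP; rewrite -subr_eq0; apply/eqP; rewrite -h; rring.

Lemma par_coef (p r : point) a b' c : rank2 p r -> c != 0 ->
  parallel (a *: p + b' *: r) (c *: r) -> a = 0.
Proof.
move=> h c0 [k [e|e]].
- have : a *: p + (b' - k * c) *: r = 0.
    use_eq e; apply/rowP=> l; rewrite !mxE; rring.
  by case/(rank2_indep h).
- have : (k * a) *: p + (k * b' - c) *: r = 0.
    symmetry in e; use_eq e; apply/rowP=> l; rewrite !mxE; rring.
  case/(rank2_indep h) => ka kb.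
  have k0 : k != 0.
    apply: contraNneq c0 => k0; move: kb; rewrite k0 mul0r add0r => /eqP.
    by rewrite oppr_eq0.
  by move/eqP: ka; rewrite mulf_eq0 (negPf k0) => /eqP.
Qed.

Lemma dual_rel (fs : lat -> point) u i j M p r b d w1 w2 w3 w4 :
 qparam u i j M p r b d ->
 fs (u + ev i) - fs u = w1 *: (f (u + ev i) - f u) ->
 fs (u + ev i + ev j) - fs (u + ev i) = w2 *: (f (u + ev i + ev j) - f (u + ev i)) ->
 fs (u + ev i + ev j) - fs (u + ev j) = w3 *: (f (u + ev i + ev j) - f (u + ev j)) ->
 fs (u + ev j) - fs u = w4 *: (f (u + ev j) - f u) ->
 parallel (fs (u + ev i + ev j) - fs u) (f (u + ev j) - f (u + ev i)) ->
 parallel (fs (u + ev j) - fs (u + ev i)) (f (u + ev i + ev j) - f u) ->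
 [/\ w1 = w2 * b, w1 = w4 * d & w4 = w3 * b].
Proof.
move=> [[eA eB eC eD] [h b0 b1 d0 d1]].
move/eqP; rewrite subr_eq => /eqP X1.
move/eqP; rewrite subr_eq => /eqP X2.
move/eqP; rewrite subr_eq => /eqP X3.
move/eqP; rewrite subr_eq => /eqP X4.
rewrite X2 X1 X4 eA eB eC eD => P1 P2.
have P1' : parallel ((w2 * b - w1) *: p + (w1 - w2) *: r) ((d - 1) *: r).
  move: P1; congr parallel; apply/rowP=> l; rewrite !mxE; rring.
have P2' : parallel ((w4 * d - w1) *: r + (w1 - w4) *: p) ((b - 1) *: p).
  move: P2; congr parallel; apply/rowP=> l; rewrite !mxE; rring.
have d10 : d - 1 != 0 by rewrite subr_eq0.
have b10 : b - 1 != 0 by rewrite subr_eq0.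
have e1 := par_coef h d10 P1'.
have e2 := par_coef (rank2_sym h) b10 P2'.
have H := X2; rewrite X3 X4 X1 eA eB eC eD in H.
have : (- w1 + w2 * b - (- w4 + w3 * b)) *: p + ((w1 - w2) - (w4 * d - w3 * d)) *: r = 0.
  symmetry in H; use_eq H; apply/rowP=> l; rewrite !mxE; rring.
case/(rank2_indep h) => e3 _.
have f1 : w1 = w2 * b by symmetry; from0 e1.
have f2 : w1 = w4 * d by symmetry; from0 e2.
split => //.
rewrite f1 in e3; from0 e3.
Qed.

Section Forward.
Hypothesis hm : (1 < m)%N.

Lemma other (i : 'I_m) : exists j : 'I_m, i != j.
Proof.
have h0 : (0 < m)%N by apply: ltnW.
case: (eqVneq (val i) 0) => [e|e].
  by exists (Ordinal hm); apply/eqP => /(congr1 val) /=; rewrite e.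
by exists (Ordinal h0); apply/eqP => /(congr1 val) /=; apply/eqP.
Qed.

Lemma nq_neqAB (A B C D : point) : planar_nondeg A B C D -> A != B.
Proof. by case=> _ [[uq _ _ _ _] _]; move: uq; rewrite /= !inE !negb_or => /andP[/and3P[]]. Qed.

Lemma forward : Koenigs f -> q_closed_on true f /\ q_closed_on false f.
Proof.
case=> fs [hfs hdual].
pose Wp x i k := fs (x + ev i) - fs x = k *: (f (x + ev i) - f x) /\ k != 0.
have Wex : forall x i, exists k, Wp x i k.
  move=> x i; have [j ij] := other i.
  have n1 := nq_neqAB (hfs x i j ij); have n2 := nq_neqAB (hf x ij).
  have [[P1 _ _ _] _] := hdual x i j ij.
  rewrite eq_sym -subr_eq0 in n1; rewrite eq_sym -subr_eq0 in n2.
  case: P1 => c [e|e].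
    exists c; split => //; apply: contraNneq n1 => c0; by rewrite e c0 scale0r.
  have c0 : c != 0 by apply: contraNneq n2 => c0; rewrite e c0 scale0r.
  exists c^-1; split; last by rewrite invr_eq0.
  by rewrite e scalerA mulVf // scale1r.
pose w x i := epsilon (inhabits 0) (Wp x i).
have Ws : forall x i, Wp x i (w x i) by move=> x i; exact: epsilon_spec (Wex x i).
pose sg x i := if black x then w x i else (w x i)^-1.
have sg0 : forall x i, sg x i != 0.
  by move=> x i; rewrite /sg; case: ifP => _; rewrite ?invr_eq0; case: (Ws x i).
have wrel : forall u i j, i != j -> exists M p r b d, qparam u i j M p r b d /\
    qform f u (i, j, true, true) = b /\ qform f (u + ev i) (i, j, false, true) = d /\
    [/\ w u i = w (u + ev i) j * b, w u i = w u j * d & w u j = w (u + ev j) i * b].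
  move=> u i j ij.
  have [M [p [r [b [d [qp [qTT _ qFT _]]]]]]] := quadf u ij.
  exists M, p, r, b, d; do 3!split => //.
  have [[_ _ _ _] [D1 D2]] := hdual u i j ij.
  apply: (dual_rel qp (Ws u i).1 (Ws (u + ev i) j).1 _ (Ws u j).1 D1 D2).
  by rewrite -(addrAC u (ev j) (ev i)); exact: (Ws (u + ev j) i).1.
have w0 : forall x i, w x i != 0 by move=> x i; case: (Ws x i).
have comm : forall x i j, sg x i * sg (x + ev i) j = sg x j * sg (x + ev j) i.
  move=> x i j; case: (eqVneq i j) => [->//|ij].
  have [M [p [r [b [d [[_ [_ b0 _ _ _]] [_ [_ [e1 _ e3]]]]]]]]] := wrel x i j ij.
  have h2 := w0 (x + ev i) j; have h3 := w0 (x + ev j) i.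
  rewrite /sg !black_ev; case: (black x) => /=; rewrite e1 e3.
    rfield; split; exact/eqP.
  rfield; repeat split; exact/eqP.
pose G := {g : R | g != 0}.
pose T x i (g : G) : G := exist _ (val g * sg x i) (mulf_neq0 (valP g) (sg0 x i)).
pose Ti x i (g : G) : G := exist _ (val g / sg x i) (mulf_neq0 (valP g) (invr_neq0 (sg0 x i))).
have [phi0 Hphi] : exists phi : lat -> G, forall x i, phi (x + ev i) = T x i (phi x).
  have t1 : forall x i g, Ti x i (T x i g) = g.
    by move=> x i g; apply: val_inj => /=; rewrite mulfK.
  have t2 : forall x i g, T x i (Ti x i g) = g.
    by move=> x i g; apply: val_inj => /=; rewrite divfK.
  have t3 : forall x i j g, T (x + ev i) j (T x i g) = T (x + ev j) i (T x j g).
    by move=> x i j g; apply: val_inj => /=; rewrite -!mulrA comm.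
  exact: (@transport G T Ti t1 t2 t3 (exist _ 1 (oner_neq0 R))).
pose rho x := val (phi0 x).
have rho0 : forall x, rho x != 0 by move=> x; rewrite /rho; case: (phi0 x).
have rhoS : forall x i, rho (x + ev i) = rho x * sg x i by move=> x i; rewrite /rho Hphi.
pose Phi x := if black x then rho x else (rho x)^-1.
have Phi0 : forall x, Phi x != 0 by move=> x; rewrite /Phi; case: ifP; rewrite ?invr_eq0.
have HQ : forall u i j, i != j ->
  Phi (u + ev i + ev j) = qform f u (i, j, true, true) * Phi u /\
  Phi (u + ev j) = qform f (u + ev i) (i, j, false, true) * Phi (u + ev i).
  move=> u i j ij.
  have [M [p [r [b [d [[_ [_ b0 _ d0 _]] [-> [-> [e1 e2 e3]]]]]]]]] := wrel u i j ij.
  have h1 := w0 u i; have h2 := w0 (u + ev i) j; have h3 := w0 (u + ev j) i; have h4 := w0 u j.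
  have hr := rho0 u.
  rewrite /Phi !rhoS /sg !black_ev; case: (black u) => /=.
    split; [rewrite e1; rfield | rewrite e2; rfield]; repeat split; exact/eqP.
  split; [rewrite e1; rfield | rewrite e2; rfield]; repeat split; exact/eqP.
split; apply: (closed_of_pot Phi0); exact: pot_of_quads.
Qed.
End Forward.

Section Converse.
Hypothesis hm : (1 < m)%N.
Hypothesis Hb : q_closed_on true f.
Hypothesis Hw : q_closed_on false f.

Definition Wk (v : lat) : seq (step m) :=
  epsilon (inhabits [::]) (fun c => all (@valid_step m) c /\ \sum_(d <- c) disp d = v).

Lemma Wk_spec v : reach v -> all (@valid_step m) (Wk v) /\ \sum_(d <- Wk v) disp d = v.
Proof. by move=> h; exact: (epsilon_spec (inhabits [::]) _ h). Qed.

Definition Psi (b x : lat) := qprod f b (Wk (x - b)).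

Lemma Hcl (b : lat) : q_closed_on (black b) f.
Proof. by case: (black b). Qed.

Lemma Psi_prop (b x : lat) d : black x = black b -> valid_step d ->
  Psi b (x + disp d) = qform f x d * Psi b x /\ Psi b x != 0.
Proof.
move=> bx vd.
have r1 : reach (x - b) by exact: (same_color_reach hm bx).
have r2 : reach (x + disp d - b) by apply: (same_color_reach hm); rewrite -bx; exact: black_disp.
have r3 : reach (b - (x + disp d)) by rewrite -opprB; apply: reachN.
have [v1 s1] := Wk_spec r1; have [v2 s2] := Wk_spec r2; have [v3 s3] := Wk_spec r3.
have Hc : forall (y : lat) (c : seq (step m)), black y = black b -> all (@valid_step m) c ->
    \sum_(d <- c) disp d = 0 -> qprod f y c = 1 by exact: Hcl.
have E1 : qprod f b (Wk (x - b) ++ d :: Wk (b - (x + disp d))) = 1.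
  apply: Hc => //; first by rewrite all_cat v1 /= vd v3.
  rewrite big_cat big_cons s1 s3 /=; latring.
have E2 : qprod f b (Wk (x + disp d - b) ++ Wk (b - (x + disp d))) = 1.
  apply: Hc => //; first by rewrite all_cat v2 v3.
  rewrite big_cat s2 s3 /=; latring.
rewrite qprod_cat s1 /= (_ : b + (x - b) = x) in E1; last by latring.
rewrite qprod_cat s2 (_ : b + (x + disp d - b) = x + disp d) in E2; last by latring.
rewrite /Psi; set Q := qprod f (x + disp d) _ in E1 E2.
have Q0 : Q != 0 by apply: contra_eq_neq E2 => ->; rewrite mulr0 eq_sym oner_neq0.
have P0 : qprod f b (Wk (x - b)) != 0 by apply: contra_eq_neq E1 => ->; rewrite mul0r eq_sym oner_neq0.
split => //.
apply: (mulIf Q0); rewrite E2 -E1; rring.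
Qed.

Let i0 : 'I_m := Ordinal (ltnW hm).

Definition PhiC (x : lat) := if black x then Psi 0 x else Psi (ev i0) x.

Lemma black0 : black (0 : lat).
Proof. by rewrite /black big1 // => k _; rewrite mxE. Qed.

Lemma PhiC_prop x d : valid_step d ->
  PhiC (x + disp d) = qform f x d * PhiC x /\ PhiC x != 0.
Proof.
move=> vd; rewrite /PhiC black_disp; case: ifP => bx.
  by apply: Psi_prop; rewrite // black0.
by apply: Psi_prop; rewrite // -(add0r (ev i0)) black_ev black0 bx.
Qed.

Lemma PhiC0 x : PhiC x != 0.
Proof.
have [j ij] := other hm i0.
by case: (PhiC_prop x (d := (i0, j, true, true)) ij).
Qed.

Lemma quadPhi u i j : i != j -> exists M p r b d, qparam u i j M p r b d /\
  PhiC (u + ev i + ev j) = b * PhiC u /\ PhiC (u + ev j) = d * PhiC (u + ev i).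
Proof.
move=> ij; have [M [p [r [b [d [qp [qTT _ qFT _]]]]]]] := quadf u ij.
exists M, p, r, b, d; split => //.
have [e1 _] := PhiC_prop u (d := (i, j, true, true)) ij.
have [e2 _] := PhiC_prop (u + ev i) (d := (i, j, false, true)) ij.
rewrite qTT /= addrA in e1; rewrite qFT /= (_ : u + ev i + (- ev i + ev j) = u + ev j) in e2 => //.
latring.
Qed.

Lemma converse : Koenigs f.
Proof.
pose w x i := (PhiC x * PhiC (x + ev i))^-1.
pose T x i (g : point) := g + w x i *: (f (x + ev i) - f x).
pose Ti x i (g : point) := g - w x i *: (f (x + ev i) - f x).
have t1 : forall x i g, Ti x i (T x i g) = g by move=> x i g; rewrite /Ti /T addrK.
have t2 : forall x i g, T x i (Ti x i g) = g by move=> x i g; rewrite /Ti /T subrK.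
have t3 : forall x i j g, T (x + ev i) j (T x i g) = T (x + ev j) i (T x j g).
  move=> x i j g; case: (eqVneq i j) => [->//|ij].
  have [M [p [r [b [d [[[eA eB eC eD] [h b0 b1 d0 d1]] [PC PD]]]]]]] := quadPhi x ij.
  have hA := PhiC0 x; have hB := PhiC0 (x + ev i).
  rewrite /T /w (addrAC x (ev j) (ev i)) PC PD eA eB eC eD.
  apply/rowP=> l; rewrite !mxE; rfield.
have [fs Hfs] := transport t1 t2 t3 0.
have key : forall u i j, i != j -> exists M p r b d k,
   ([/\ rank2 p r, b != 0, b != 1, d != 0 & d != 1] /\ k != 0) /\
   [/\ f u = M + p, f (u + ev i) = M + r, f (u + ev i + ev j) = M + b *: p & f (u + ev j) = M + d *: r] /\
   [/\ fs (u + ev i) = fs u + k *: (r - p),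
       fs (u + ev i + ev j) = fs u + (k * (1 - b^-1)) *: r &
       fs (u + ev j) = fs u + (k / d) *: (d *: r - p)].
  move=> u i j ij.
  have [M [p [r [b [d [[[eA eB eC eD] [h b0 b1 d0 d1]] [PC PD]]]]]]] := quadPhi u ij.
  have hA := PhiC0 u; have hB := PhiC0 (u + ev i).
  exists M, p, r, b, d, (PhiC u * PhiC (u + ev i))^-1.
  split; first by split => //; rewrite invr_eq0 mulf_neq0.
  split; first by [].
  have sB : fs (u + ev i) = fs u + (PhiC u * PhiC (u + ev i))^-1 *: (r - p).
    rewrite Hfs /T /w eA eB; apply/rowP=> l; rewrite !mxE; rring.
  split => //.
  - rewrite Hfs /T /w sB PC eB eC; apply/rowP=> l; rewrite !mxE; rfield.
  - rewrite Hfs /T /w PD eA eD; apply/rowP=> l; rewrite !mxE; rfield.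
exists fs; split.
- move=> u i j ij.
  have [M [p [r [b [d [k [[[h b0 b1 d0 d1] k0] [_ [sB sC sD]]]]]]]]] := key u i j ij.
  rewrite sB sC sD; exact: dual_nondeg.
- move=> u i j ij.
  have [M [p [r [b [d [k [[[h b0 b1 d0 d1] k0] [[eA eB eC eD] [sB sC sD]]]]]]]]] := key u i j ij.
  rewrite sB sC sD eA eB eC eD; exact: dual_ok.
Qed.

End Converse.

End QuadF.



End Main.

Theorem mainTheorem2 (R : realFieldType) (N m : nat) (hN : (3 <= N)%N) (hm : (2 <= m)%N)
  (f : 'rV[int]_m -> 'rV[R]_N) (hf : Qnet f) :
  Koenigs f <-> (q_closed_on true f /\ q_closed_on false f).
Proof.
split.
  by move=> hk; exact: (forward hf hm hk).
by case=> Hb Hw; exact: (converse hf hm Hb Hw).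
Qed.
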